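(* Let $E$ be a $k$-dimensional subspace of $\mathbb{C}^n$ with $k>1$, and let $W$ be a nonzero subspace of $E$. Then $W$ is special in $E$ if and only if $W = E\cap P(W)$.
   Context: A polydiagonal is a subspace of $\mathbb{C}^n$ of the form $\{x\in\mathbb{C}^n : x_i=x_j \text{ for all } (i,j)\in R\}$ for some (possibly empty) set $R$ of pairs of indices in $\{1,\dots,n\}$; i.e. a subspace defined by equalities of coordinates. The fully synchrony subspace is $F=\{x_1=x_2=\cdots=x_n\}$ (contained in every polydiagonal). For a subspace $W\subseteq\mathbb{C}^n$, $P(W)$ denotes the smallest polydiagonal containing $W$ (the intersection of all polydiagonals containing $W$). Given a subspace $E$ of $\mathbb{C}^n$, a subspace $W$ of $E$ is called special in $E$ if for every subspace $U$ of $E$ with $\dim U=\dim W$ and $P(U)\subseteq P(W)$ one has $P(U)=P(W)$. *)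

(* Defs.v *)
(* C^n is modelled as row vectors 'rV[R]_n over an arbitrary
   numClosedFieldType R (algebraically closed field of char 0, e.g. algC). *)
From HB Require Import structures.
From mathcomp Require Import all_boot all_order all_algebra all_field.
Set Implicit Arguments. Unset Strict Implicit. Unset Printing Implicit Defensive.
Import GRing.Theory Num.Theory.
Local Open Scope ring_scope.

Definition polydiagonal (R : fieldType) (n : nat) (D : {vspace 'rV[R]_n}) : Prop :=
  exists r : rel 'I_n, forall x : 'rV[R]_n,
    x \in D <-> (forall i j, r i j -> x 0 i = x 0 j).

Definition inP (R : fieldType) (n : nat) (W : {vspace 'rV[R]_n}) (x : 'rV[R]_n) : Prop :=
  forall D : {vspace 'rV[R]_n}, polydiagonal D -> (W <= D)%VS -> x \in D.

Definition special (R : fieldType) (n : nat) (E W : {vspace 'rV[R]_n}) : Prop :=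
  (W <= E)%VS /\
  forall U : {vspace 'rV[R]_n}, (U <= E)%VS -> \dim U = \dim W ->
    (forall x, inP U x -> inP W x) -> (forall x, inP U x <-> inP W x).

(* Main.v *)
Require Import Defs.

From HB Require Import structures.
From mathcomp Require Import all_boot all_order all_algebra all_field.
From Stdlib Require Import Classical ClassicalEpsilon.
From mathcomp Require Import zify.
Import GRing.Theory Num.Theory.
Local Open Scope ring_scope.

Set Implicit Arguments. Unset Strict Implicit.
Section Lin.
Variables (R : fieldType) (n : nat).

Definition pdf (r : rel 'I_n) (x : 'rV[R]_n) : 'M[R]_n :=
  \matrix_(i, j) (if r i j then x 0 i - x 0 j else 0).

Fact pdf_lin r : linear (pdf r).
Proof.
move=> c x y; apply/matrixP=> i j; rewrite !mxE.
case: (r i j); rewrite ?mulr0 ?addr0 //.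
by rewrite mulrBr opprD addrACA.
Qed.

HB.instance Definition _ r := GRing.isLinear.Build R 'rV[R]_n 'M[R]_n _ (pdf r) (pdf_lin r).

Definition PD (r : rel 'I_n) : {vspace 'rV[R]_n} := lker (linfun (pdf r)).

Lemma memPD r x : x \in PD r <-> (forall i j, r i j -> x 0 i = x 0 j).
Proof.
rewrite memv_ker lfunE /=; split.
  move=> /eqP H i j rij; have := congr1 (fun M : 'M[R]_n => M i j) H.
  by rewrite !mxE rij => /eqP; rewrite subr_eq0 => /eqP.
move=> H; apply/eqP/matrixP=> i j; rewrite !mxE.
by case rij: (r i j); rewrite // (H i j rij) subrr.
Qed.

Lemma PD_poly r : polydiagonal (PD r).
Proof. by exists r => x; apply: memPD. Qed.

Definition gf (a b : 'I_n) (x : 'rV[R]_n) : 'rV[R]_1 := \row_(j < 1) (x 0 a - x 0 b).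

Fact gf_lin a b : linear (gf a b).
Proof.
move=> c x y; apply/matrixP=> i j; rewrite !mxE.
by rewrite mulrBr opprD addrACA.
Qed.

HB.instance Definition _ a b := GRing.isLinear.Build R 'rV[R]_n 'rV[R]_1 _ (gf a b) (gf_lin a b).

Lemma mem_kerg a b x : x \in lker (linfun (gf a b)) <-> x 0 a = x 0 b.
Proof.
rewrite memv_ker lfunE /=; split.
  move=> /eqP H; have := congr1 (fun M : 'rV[R]_1 => M 0 0) H.
  by rewrite !mxE => /eqP; rewrite subr_eq0 => /eqP.
by move=> H; apply/eqP/matrixP=> i j; rewrite !mxE H subrr.
Qed.

Definition rW (W : {vspace 'rV[R]_n}) (i j : 'I_n) : bool :=
  if excluded_middle_informative (forall w, w \in W -> w 0 i = w 0 j) then true else false.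

Lemma rWP (W : {vspace 'rV[R]_n}) i j : rW W i j <-> (forall w, w \in W -> w 0 i = w 0 j).
Proof.
by rewrite /rW; case: excluded_middle_informative.
Qed.

Lemma W_PW (W : {vspace 'rV[R]_n}) : (W <= PD (rW W))%VS.
Proof.
apply/subvP=> w wW; apply/memPD => i j /rWP; exact.
Qed.

Lemma inP_iff (W : {vspace 'rV[R]_n}) (x : 'rV[R]_n) : inP W x <-> x \in PD (rW W).
Proof.
split; first by move=> H; apply: H; [apply: PD_poly | apply: W_PW].
move=> /memPD Hx D [r Hr] WD; apply/Hr => i j rij.
apply: Hx; apply/rWP => w wW.
by have /Hr := subvP WD w wW; apply.
Qed.

Lemma inP_self (W : {vspace 'rV[R]_n}) (x : 'rV[R]_n) : x \in W -> inP W x.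
Proof. by move=> xW D _ WD; apply: (subvP WD). Qed.

End Lin.

Theorem mainTheorem1 (R : numClosedFieldType) (n k : nat)
    (E W : {vspace 'rV[R]_n}) :
  \dim E = k -> (1 < k)%N -> (W <= E)%VS -> W != 0%VS ->
  special E W <-> (forall x : 'rV[R]_n, x \in W <-> (x \in E /\ inP W x)).
Proof.
move=> dimE k1 WE W0; split; last first.
  move=> H; split=> // U UE dU Hs.
  have UW : (U <= W)%VS.
    apply/subvP => u uU; apply/H; split; first exact: (subvP UE).
    by apply: Hs; apply: inP_self.
  have /eqP -> : U == W by rewrite eqEdim UW dU leqnn.
  by [].
case=> _ Hsp x; split.
  by move=> xW; split; [exact: (subvP WE) | exact: inP_self].
case=> xE xPW; case: (boolP (x \in W)) => // xnW; exfalso.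
have xPD := proj1 (inP_iff W x) xPW.
case: (classic (forall i j, rW W i j)) => [tot | ntot].
  set w := vpick W.
  have wW : w \in W by exact: memv_pick.
  have wn0 : w != 0 by rewrite vpick0.
  case: (pickP (fun i => w 0 i != 0)) => [i0 Hi0 | H0]; last first.
    move/negP: wn0; apply; apply/eqP/rowP => i; rewrite mxE.
    by move/negbFE/eqP: (H0 i).
  move/negP: xnW; apply.
  have -> : x = (x 0 i0 / w 0 i0) *: w.
    apply/rowP => i; rewrite mxE.
    have -> : w 0 i = w 0 i0 by apply: (proj1 (rWP W i i0) (tot i i0)).
    rewrite mulfVK //.
    exact: (proj1 (memPD _ _) xPD i i0 (tot i i0)).
  exact: memvZ.
have [a [b nab]] : exists a b, ~ rW W a b.
  apply: NNPP => Hn; apply: ntot => i j; apply: NNPP => Hij; apply: Hn.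
  by exists i, j.
have [w [wW wab]] : exists w, w \in W /\ w 0 a <> w 0 b.
  apply: NNPP => Hn; apply: nab; apply/rWP => w wW; apply: NNPP => Hw.
  by apply: Hn; exists w.
set V := (W + <[x]>)%VS.
set g := linfun (gf (R:=R) a b).
set U := (V :&: lker g)%VS.
have VE : (V <= E)%VS by rewrite subv_add WE -memvE xE.
have VP : (V <= PD R (rW W))%VS by rewrite subv_add W_PW -memvE xPD.
have xV : x \in V by apply: (subvP (addvSr W <[x]>)); apply: memv_line.
have dimV : \dim V = (\dim W).+1.
  have h1 := dimv_sum_cap W <[x]>.
  have h2 : (\dim <[x]> <= 1)%N by rewrite dim_vline; case: (x != 0).
  have [le eqc] := dimv_leqif_sup (addvSl W <[x]>).
  have h3 : (\dim W != \dim V).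
    rewrite eqc; apply/negP => /subvP /(_ x xV); by rewrite (negbTE xnW).
  rewrite -/V in h1; apply/eqP; rewrite eqn_leq; apply/andP; split.
    have : (\dim V <= \dim W + \dim <[x]>)%N by rewrite -h1 leq_addr.
    by move/leq_trans; apply; rewrite -(addn1 (\dim W)) leq_add2l.
  by rewrite ltn_neqAle h3 le.
have dimimg : \dim (g @: V)%VS = 1%N.
  have h1 : (\dim (g @: V)%VS <= 1)%N.
    by have := dimvS (subvf (g @: V)%VS); rewrite dimvf /= dim_matrix.
  have gw : g w != 0.
    by rewrite -memv_ker; apply/negP => /mem_kerg.
  have h2 : \dim (g @: V)%VS != 0%N.
    rewrite dimv_eq0; apply/negP => /eqP Himg.
    have := memv_img g (subvP (addvSl W <[x]>) w wW).
    by rewrite -/V Himg memv0 (negbTE gw).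
  by apply/eqP; rewrite eqn_leq h1 lt0n h2.
have dimU : \dim U = \dim W.
  have := limg_ker_dim g V; rewrite -/U dimimg dimV addn1 => /eqP.
  by rewrite eqSS => /eqP.
have UP : (U <= PD R (rW W))%VS by apply: subv_trans (capvSl _ _) VP.
have := Hsp U (subv_trans (capvSl _ _) VE) dimU.
have Hs : forall y, inP U y -> inP W y.
  move=> y Hy; apply/inP_iff; exact: (Hy _ (PD_poly R _) UP).
move=> /(_ Hs w) [_ /(_ (inP_self wW)) hU].
have UD : (U <= PD R (fun i j => (i == a) && (j == b)))%VS.
  apply/subvP => u /memv_capP [_ /mem_kerg uab]; apply/memPD => i j.
  by case/andP => /eqP -> /eqP ->.
have := hU _ (PD_poly R _) UD.
by move/memPD => /(_ a b); rewrite !eqxx => /(_ isT).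
Qed.
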